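(* Let $f: \mathbb{R}^n \to \mathbb{R}^n$ be topical. Then $$\inf \Lambda(f) = \inf_{x\in\mathbb{R}^n} \max_{1\le i\le n} (f_i(x) - x_i) = \overline{\chi}(f).$$
   Context: $f$ is topical if $f(x+h) = f(x)+h$ for all $h\in\mathbb{R}$ (scalar added to each coordinate) and $x\le y$ componentwise implies $f(x)\le f(y)$. $S^\lambda(f) = \{x : f(x) \le \lambda + x\}$ and $\Lambda(f) = \{\lambda\in\mathbb{R} : S^\lambda(f)\ne\emptyset\}$. The upper cycle time is $\overline{\chi}(f) = \lim_{k\to\infty} \max_i f^k_i(x)/k$, a limit that exists and is independent of $x \in \mathbb{R}^n$. *)

(* Defs.v *)
(* + MathComp-Analysis, over an abstract R : realType.
   Vectors of R^n (n >= 1) are functions 'I_n.+1 -> R. *)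
From HB Require Import structures.
From mathcomp Require Import all_boot all_order all_algebra.
From mathcomp Require Import all_classical all_reals all_analysis.
Set Implicit Arguments. Unset Strict Implicit. Unset Printing Implicit Defensive.
Import Order.TTheory GRing.Theory Num.Theory.
Local Open Scope classical_set_scope.
Local Open Scope ring_scope.

Section Defs.
Variables (R : realType) (n : nat).
Notation vec := ('I_n.+1 -> R).

Definition topical (f : vec -> vec) : Prop :=
  (forall (x : vec) (h : R), f (fun i => x i + h) = (fun i => f x i + h)) /\
  (forall x y : vec, (forall i, x i <= y i) -> forall i, f x i <= f y i).

Definition vmax (v : vec) : R := \big[Num.max/v ord0]_(i < n.+1) v i.

Definition Slambda (f : vec -> vec) (l : R) : set vec :=
  [set x | forall i, f x i <= l + x i].

Definition Lambda (f : vec -> vec) : set R := [set l | Slambda f l !=set0].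

End Defs.

(* Main.v *)
Require Import Defs.
From HB Require Import structures.
From mathcomp Require Import all_boot all_order all_algebra.
From mathcomp Require Import all_classical all_reals all_analysis.
From mathcomp Require Import lra.
Import Order.TTheory GRing.Theory Num.Theory numFieldTopology.Exports numFieldNormedType.Exports.
Local Open Scope classical_set_scope.
Local Open Scope ring_scope.

Lemma vmax_ge (R : realType) (n : nat) (v : 'I_n.+1 -> R) i : v i <= vmax v.
Proof. exact: le_bigmax. Qed.
Arguments vmax_ge {R n}.

Lemma vmax_le (R : realType) (n : nat) (v : 'I_n.+1 -> R) b :
  (forall i, v i <= b) -> vmax v <= b.
Proof. by move=> H; apply: bigmax_le => // i _; apply: H. Qed.
Arguments vmax_le {R n}.

Lemma top_nexp (R : realType) (n : nat) (f : ('I_n.+1 -> R) -> ('I_n.+1 -> R)) :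
  topical f -> forall (x y : 'I_n.+1 -> R) (h : R), (forall i, x i <= y i + h) -> forall i, f x i <= f y i + h.
Proof.
move=> [Hh Hm] x y h H i.
have := Hm x (fun i => y i + h) H i; by rewrite Hh.
Qed.
Arguments top_nexp {R n f}.

Lemma top_iter (R : realType) (n : nat) (f : ('I_n.+1 -> R) -> ('I_n.+1 -> R)) :
  topical f -> forall k (x y : 'I_n.+1 -> R) (h : R), (forall i, x i <= y i + h) ->
  forall i, iter k f x i <= iter k f y i + h.
Proof.
move=> tf; elim=> [|k IH] x y h H i //=.
move: i; apply: (top_nexp tf). exact: IH.
Qed.
Arguments top_iter {R n f}.

Lemma top_sub (R : realType) (n : nat) (f : ('I_n.+1 -> R) -> ('I_n.+1 -> R)) (x : 'I_n.+1 -> R) (mu : R) :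
  topical f -> (forall i, f x i <= mu + x i) ->
  forall k i, iter k f x i <= x i + k%:R * mu.
Proof.
move=> tf H; elim=> [|k IH] i /=; first by rewrite mul0r addr0.
have := top_nexp tf _ x (k%:R * mu) IH i; have := H i; rewrite -natr1; lra.
Qed.
Arguments top_sub {R n f}.

Lemma top_constr (R : realType) (n : nat) (f : ('I_n.+1 -> R) -> ('I_n.+1 -> R)) (N : nat) (z : 'I_n.+1 -> R) (mu : R) :
  topical f -> (0 < N)%N -> (forall i, iter N f z i <= z i + N%:R * mu) ->
  exists x, forall i, f x i <= mu + x i.
Proof.
move=> tf N0 HN.
pose x := fun i => \big[Num.min/z i]_(k < N) (iter k f z i - k%:R * mu).
have Hk : forall k : 'I_N, forall i, f x i <= iter k.+1 f z i - k%:R * mu.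
  move=> k i; rewrite iterS; apply: (top_nexp tf _ (iter k f z) (- (k%:R*mu))) => j.
  have : x j <= iter k f z j - k%:R * mu by rewrite /x; apply: bigmin_le.
  lra.
have Hz : forall i, f x i - mu <= z i.
  move=> i; have NN : (N.-1 < N)%N by rewrite prednK.
  have := Hk (Ordinal NN) i; rewrite [nat_of_ord _]/= prednK //.
  have := HN i; have -> : N%:R = (N.-1)%:R + 1 :> R by rewrite natr1 prednK.
  lra.
exists x => i; rewrite -lerBlDl; apply: le_bigmin => // k _.
case: k => [[|k] kN] /=; first by rewrite mul0r subr0 Hz.
have := Hk (Ordinal (ltnW kN)) i => /=; rewrite -natr1; lra.
Qed.
Arguments top_constr {R n f}.

Lemma top_lb (R : realType) (n : nat) (f : ('I_n.+1 -> R) -> ('I_n.+1 -> R)) :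
  topical f -> forall x : 'I_n.+1 -> R,
  - vmax (fun i => - f (fun _ => 0) i) <= vmax (fun i => f x i - x i).
Proof.
move=> [Hh Hm] x.
case: (@arg_minP _ _ _ (ord0 : 'I_n.+1) xpredT x isT) => j _ Hj.
have H1 : forall i, (fun i => (fun _ : 'I_n.+1 => (0:R)) i + x j) i <= x i.
  by move=> i /=; rewrite add0r; apply: Hj.
have := Hm _ _ H1 j; rewrite Hh /= => H2.
have := vmax_ge (fun i => f x i - x i) j.
have := vmax_ge (fun i => - f (fun _ => 0) i) j => /=.
lra.
Qed.

Theorem proposition2p3 (R : realType) (n : nat) (f : ('I_n.+1 -> R) -> ('I_n.+1 -> R)) :
  topical f ->
  exists chi : R,
    (forall x : 'I_n.+1 -> R,
        (fun k : nat => vmax (iter k f x) / (k%:R : R)) @ \oo --> chi) /\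
    ereal_inf [set l%:E | l in Lambda f] = chi%:E /\
    ereal_inf (range (fun x : 'I_n.+1 -> R => (vmax (fun i => f x i - x i))%:E))
      = chi%:E.
Proof.
move=> tf.
pose g := fun x : 'I_n.+1 -> R => vmax (fun i => f x i - x i).
pose S := range g.
pose L := - vmax (fun i => - f (fun _ => 0) i).
have lbS : lbound S L by move=> _ [x _ <-]; apply: top_lb.
have hinf : has_inf S.
  split; first by exists (g (fun _ => 0)); exists (fun _ => 0).
  by exists L.
pose chi := inf S.
have chi_le : forall x, chi <= g x.
  by move=> x; apply: (ge_inf hinf.2); exists x.
have chi_adh : forall e, 0 < e -> exists x, g x < chi + e.
  move=> e e0; have [_ [x _ <-] H] := inf_adherent e0 hinf; by exists x.
have Hg : forall x mu, g x <= mu -> forall i, f x i <= mu + x i.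
  move=> x mu H i; have := vmax_ge (fun i => f x i - x i) i => /=.
  rewrite -/(g x); lra.
have Hg' : forall x mu, (forall i, f x i <= mu + x i) -> g x <= mu.
  move=> x mu H; apply: vmax_le => i; have := H i; lra.
have Hk : forall y k, (0 < k)%N ->
    k%:R * chi <= vmax (fun i => iter k f y i - y i).
  move=> y k k0.
  set V := vmax _.
  have kR : (0 : R) < k%:R by rewrite ltr0n.
  have Hmu : forall i, iter k f y i <= y i + k%:R * (V / k%:R).
    move=> i; rewrite mulrC divfK ?gt_eqF //.
    have := vmax_ge (fun i => iter k f y i - y i) i => /=; rewrite -/V; lra.
  have [x Hx] := top_constr k y (V / k%:R) tf k0 Hmu.
  have := le_trans (chi_le x) (Hg' _ _ Hx).
  rewrite ler_pdivlMr // => H; rewrite mulrC; exact: H.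
exists chi; split; [|split].
- move=> y; apply/cvgrPdist_le => e e0.
  have e20 : 0 < e / 2 by rewrite divr_gt0.
  have [x Hx] := chi_adh _ e20.
  pose A := vmax x. pose D := vmax (fun i => y i - x i).
  pose m := - vmax (fun i => - y i).
  have Up : forall k, vmax (iter k f y) <= A + D + k%:R * g x.
    move=> k; apply: vmax_le => i.
    have H1 : forall i, y i <= x i + D.
      by move=> i'; have := vmax_ge (fun i => y i - x i) i' => /=; rewrite -/D; lra.
    have := top_iter tf k _ _ _ H1 i.
    have := top_sub x (g x) tf (Hg x (g x) (lexx _)) k i.
    have := vmax_ge x i; rewrite -/A; lra.
  have Lo : forall k, vmax (fun i => iter k f y i - y i) <= vmax (iter k f y) - m.
    move=> k; apply: vmax_le => i.
    have := vmax_ge (iter k f y) i; have := vmax_ge (fun i => - y i) i => /=.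
    rewrite /m; lra.
  pose B := (`|A + D| + `|m|) * 2 / e.
  have B0 : 0 <= B by rewrite /B divr_ge0 ?mulr_ge0 ?addr_ge0 // ltW.
  have BE : B * e = (`|A + D| + `|m|) * 2 by rewrite /B divfK ?gt_eqF.
  near=> k.
  have HK : B + 1 <= k%:R by near: k; apply: nbhs_infty_ger.
  have k0 : (0 < k)%N by rewrite -(ltr0n R); lra.
  have K0 : (0 : R) < k%:R by lra.
  set K := k%:R in HK K0 *.
  have := Hk y k k0; have := Lo k; have := Up k.
  rewrite -/K; set V := vmax (iter k f y) => U1 L1 L2.
  have VK : V = (V / K) * K by rewrite divfK ?gt_eqF.
  set w := V / K in VK *.
  have KE : K * e >= (`|A + D| + `|m|) * 2 by rewrite -BE; nra.
  have h1 : A + D <= `|A + D| by apply: ler_norm.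
  have h2 : - m <= `|m| by rewrite -normrN; apply: ler_norm.
  have h3 : 0 <= `|A + D| by [].
  have h4 : 0 <= `|m| by [].
  rewrite ler_norml; apply/andP; split; nra.
- apply/eqP; rewrite eq_le; apply/andP; split.
  + apply/lee_addgt0Pr => e e0; apply: ge_ereal_inf.
    have [x Hx] := chi_adh e e0.
    exists (g x)%:E; first by exists (g x) => //; exists x; apply: Hg.
    by rewrite lee_fin ltW.
  + apply/ereal_infP => _ [l [x Hx] <-]; rewrite lee_fin.
    exact: le_trans (chi_le x) (Hg' x l Hx).
- apply/eqP; rewrite eq_le; apply/andP; split.
  + apply/lee_addgt0Pr => e e0; apply: ge_ereal_inf.
    have [x Hx] := chi_adh e e0.
    exists (g x)%:E; first by exists x.
    by rewrite lee_fin ltW.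
  + apply/ereal_infP => _ [x _ <-]; rewrite lee_fin; exact: chi_le.
Unshelve. all: by end_near.
Qed.
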